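(* Every countable pca $\mathcal{A}$ embeds in $\mathcal{K}_2$.
   Context: A pca is a set with a partial binary application operation containing distinct $\mathrm{s},\mathrm{k}$ with $\mathrm{k}ab\downarrow=a$, $\mathrm{s}ab\downarrow$, $\mathrm{s}abc\simeq(ac)(bc)$. An embedding of pcas is an injective map $f$ with: if $ab$ is defined then $f(a)f(b)$ is defined and equals $f(ab)$. $\mathcal{K}_2$: elements are all total functions $g:\omega\to\omega$, with $g\cdot h$ the function $n\mapsto\Phi^{g\oplus h}_{g(0)}(n)$ ($\Phi_e$ the $e$-th Turing functional, $(g\oplus h)(2n)=g(n)$, $(g\oplus h)(2n+1)=h(n)$), defined if and only if this function is total. *)

(* Defs.v *)
From mathcomp Require Import all_boot.
Set Implicit Arguments. Unset Strict Implicit. Unset Printing Implicit Defensive.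

Definition oapp (A : Type) (app : A -> A -> option A) (x y : option A) : option A :=
  match x, y with Some a, Some b => app a b | _, _ => None end.

(* A pca: distinct s, k with  k a b = a,  s a b defined,  s a b c ~ (a c)(b c)
   (Kleene equality = equality of option values). *)
Definition is_pca (A : Type) (app : A -> A -> option A) : Prop :=
  exists s k : A, s <> k /\
    (forall a b, oapp app (app k a) (Some b) = Some a) /\
    (forall a b, exists v, oapp app (app s a) (Some b) = Some v) /\
    (forall a b c, oapp app (oapp app (app s a) (Some b)) (Some c)
                   = oapp app (app a c) (app b c)).

Definition countable_type (A : Type) : Prop := exists g : A -> nat, injective g.

(* Oracle-computable partial functionals (mu-recursive with oracle)      *)
(* Programs are generic trees GenTree.tree nat (a countType); the e-th   *)
(* program is  unpickle e.  Meaning of a tree, on argument list xs:      *)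
(*   anything else    : nowhere defined                                  *)

Notation prog := (GenTree.tree nat).

Inductive eval (f : nat -> nat) : prog -> seq nat -> nat -> Prop :=
| ev_proj i xs : eval f (GenTree.Leaf i) xs (nth 0 xs i)
| ev_zero l xs : eval f (GenTree.Node 0 l) xs 0
| ev_succ l xs : eval f (GenTree.Node 1 l) xs (nth 0 xs 0).+1
| ev_orc l xs : eval f (GenTree.Node 2 l) xs (f (nth 0 xs 0))
| ev_comp g hs xs ys y :
    evals f hs xs ys -> eval f g ys y -> eval f (GenTree.Node 3 (g :: hs)) xs y
| ev_rec0 b s xs y :
    eval f b xs y -> eval f (GenTree.Node 4 [:: b; s]) (0 :: xs) y
| ev_recS b s n xs r y :
    eval f (GenTree.Node 4 [:: b; s]) (n :: xs) r ->
    eval f s (n :: r :: xs) y ->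
    eval f (GenTree.Node 4 [:: b; s]) (n.+1 :: xs) y
| ev_mu c xs y :
    mu_search f c xs 0 y -> eval f (GenTree.Node 5 [:: c]) xs y
with evals (f : nat -> nat) : seq prog -> seq nat -> seq nat -> Prop :=
| evs_nil xs : evals f [::] xs [::]
| evs_cons h hs xs y ys :
    eval f h xs y -> evals f hs xs ys -> evals f (h :: hs) xs (y :: ys)
with mu_search (f : nat -> nat) : prog -> seq nat -> nat -> nat -> Prop :=
| mu_stop c xs z : eval f c (z :: xs) 0 -> mu_search f c xs z z
| mu_step c xs z v y :
    eval f c (z :: xs) v.+1 -> mu_search f c xs z.+1 y -> mu_search f c xs z y.

Definition Phi (f : nat -> nat) (e n y : nat) : Prop :=
  match @unpickle prog e with
  | Some p => eval f p [:: n] y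
  | None => False
  end.

Definition join (g h : nat -> nat) (m : nat) : nat :=
  if odd m then h m./2 else g m./2.

Definition K2app (g h k : nat -> nat) : Prop :=
  forall n, Phi (join g h) (g 0) n (k n).

Definition embeds_in_K2 (A : Type) (app : A -> A -> option A) : Prop :=
  exists F : A -> (nat -> nat), injective F /\
    forall a b c, app a b = Some c -> K2app (F a) (F b) (F c).

(* Main.v *)
Require Import Defs.
From mathcomp Require Import all_boot.
From mathcomp Require Import zify.
From Stdlib Require Import ClassicalEpsilon.

Set Implicit Arguments. Unset Strict Implicit.

Definition cmp (g : prog) (hs : seq prog) : prog := GenTree.Node 3 (g :: hs).
Definition PZ : prog := GenTree.Node 0 [::].
Definition SUC : prog := GenTree.Node 1 [::].
Definition ORC : prog := GenTree.Node 2 [::].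
Definition PD : prog := GenTree.Node 4 [:: PZ; cmp SUC [:: cmp SUC [:: GenTree.Leaf 1]]].
Definition POS : prog :=
  GenTree.Node 4 [:: cmp SUC [:: cmp PD [:: GenTree.Leaf 0]]; cmp PD [:: GenTree.Leaf 1]].
Definition C3 : prog := cmp SUC [:: cmp SUC [:: cmp SUC [:: PZ]]].
Definition HK : prog := cmp SUC [:: cmp SUC [:: cmp ORC [:: C3]]].
Definition MAIN : prog := cmp ORC [:: cmp POS [:: HK; GenTree.Leaf 0]].

Lemma ev_cmp1 f g h xs y z : eval f h xs y -> eval f g [:: y] z -> eval f (cmp g [:: h]) xs z.
Proof. move=> H1 H2; apply: (ev_comp (ys := [:: y])) => //; apply: evs_cons => //; exact: evs_nil. Qed.

Lemma ev_cmp2 f g h1 h2 xs y1 y2 z : eval f h1 xs y1 -> eval f h2 xs y2 ->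
  eval f g [:: y1; y2] z -> eval f (cmp g [:: h1; h2]) xs z.
Proof.
move=> H1 H2 H3; apply: (ev_comp (ys := [:: y1; y2])) => //.
apply: evs_cons => //; apply: evs_cons => //; exact: evs_nil.
Qed.

Lemma ev_S f xs v : nth 0 xs 0 = v -> eval f SUC xs v.+1.
Proof. by move=> <-; apply: ev_succ. Qed.

Lemma ev_O f xs v : nth 0 xs 0 = v -> eval f ORC xs (f v).
Proof. by move=> <-; apply: ev_orc. Qed.

Lemma ev_P f xs i v : nth 0 xs i = v -> eval f (GenTree.Leaf i) xs v.
Proof. by move=> <-; apply: ev_proj. Qed.

Lemma ev_Z f xs : eval f PZ xs 0.
Proof. exact: ev_zero. Qed.

Lemma evD f x : eval f PD [:: x] x.*2.
Proof.
elim: x => [|x IH]; first by apply: ev_rec0; apply: ev_Z.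
apply: (ev_recS IH).
apply: ev_cmp1; last exact: ev_S.
apply: ev_cmp1; last exact: ev_S.
exact: ev_P.
Qed.

Definition pos (j n : nat) : nat := 2 ^ j * n.*2.+1.

Lemma evPOS f j n : eval f POS [:: j; n] (pos j n).
Proof.
rewrite /pos; elim: j => [|j IH].
  apply: ev_rec0; rewrite expn0 mul1n.
  apply: ev_cmp1; last exact: ev_S.
  apply: ev_cmp1; last exact: evD.
  exact: ev_P.
apply: (ev_recS IH).
apply: ev_cmp1; last first.
  have -> : 2 ^ j.+1 * n.*2.+1 = (2 ^ j * n.*2.+1).*2 by rewrite expnS -mulnA; lia.
  exact: evD.
exact: ev_P.
Qed.

Lemma evMAIN f n : eval f MAIN [:: n] (f (pos (f 3).+2 n)).
Proof.
apply: ev_cmp1; last exact: ev_O.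
apply: ev_cmp2; last exact: evPOS.
  apply: ev_cmp1; last exact: ev_S.
  apply: ev_cmp1; last exact: ev_S.
  apply: ev_cmp1; last exact: ev_O.
  apply: ev_cmp1; last exact: ev_S.
  apply: ev_cmp1; last exact: ev_S.
  apply: ev_cmp1; last exact: ev_S.
  exact: ev_Z.
exact: ev_P.
Qed.

Lemma pos_inj j n j' n' : pos j n = pos j' n' -> j = j' /\ n = n'.
Proof.
rewrite /pos; elim: j j' => [|j IH] [|j'] //=.
- rewrite !expn0 !mul1n => h; split => //; lia.
- rewrite expn0 mul1n expnS -mulnA; set x := _ * _; lia.
- rewrite expn0 mul1n expnS -mulnA; set x := _ * _; lia.
- rewrite !expnS -!mulnA => h.
  have [-> ->] : j = j' /\ n = n' by apply: IH; lia.
  by [].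
Qed.

Lemma pos_gt j n : n < pos j n.
Proof.
rewrite /pos; have : 0 < 2 ^ j by rewrite expn_gt0.
set x := 2 ^ j; nia.
Qed.

Lemma pos_ge2 j n : 2 <= pos j.+1 n.
Proof.
rewrite /pos expnS; have : 0 < 2 ^ j by rewrite expn_gt0.
set x := 2 ^ j; nia.
Qed.

Section Constr.
Variables (A : Type) (app : A -> A -> option A) (g : A -> nat).
Hypothesis ginj : injective g.

Definition Pk (a : A) (m : nat) (p : nat * A) : Prop :=
  exists b, m = pos (g b).+1 p.1 /\ app a b = Some p.2.

Definition pick (a : A) (m : nat) : option (nat * A) :=
  match excluded_middle_informative (exists p, Pk a m p) with
  | left H => Some (proj1_sig (constructive_indefinite_description _ H))
  | right _ => None
  end.

Lemma pickP a m p : pick a m = Some p -> Pk a m p.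
Proof.
rewrite /pick; case: excluded_middle_informative => // H [<-].
exact: proj2_sig.
Qed.

Lemma Pk_uniq a m p q : Pk a m p -> Pk a m q -> p = q.
Proof.
case: p q => n c [n' c'] [b [h1 h2]] [b' [h1' h2']] /=.
move: h1; rewrite h1' => /pos_inj [/eq_add_S /ginj eb en].
subst; move: h2 en; rewrite h2' /= => -[->] ->; done.
Qed.

Lemma pickS a m p : Pk a m p -> pick a m = Some p.
Proof.
move=> Hp; rewrite /pick; case: excluded_middle_informative => [H|H]; last first.
  by exfalso; apply: H; exists p.
congr Some; apply: Pk_uniq (proj2_sig _) Hp.
Qed.

Fixpoint Gf (fuel : nat) (a : A) (m : nat) : nat :=
  match fuel with
  | 0 => 0
  | f.+1 => if m == 0 then pickle MAIN else if m == 1 then g a else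
      match pick a m with Some (n, c) => Gf f c n | None => 0 end
  end.

Lemma Gf_stable f f' a m : m < f -> m < f' -> Gf f a m = Gf f' a m.
Proof.
elim: f f' a m => [|f IH] [|f'] a m //= h1 h2.
case: (m == 0) => //; case: (m == 1) => //.
case E: (pick a m) => [[n c]|] //.
have [b [hm _]] := pickP E.
have := pos_gt (g b).+1 n; rewrite /= -hm => hn.
apply: IH; lia.
Qed.

Definition F (a : A) (m : nat) : nat := Gf m.+1 a m.

Lemma F0 a : F a 0 = pickle MAIN. Proof. by []. Qed.
Lemma F1 a : F a 1 = g a. Proof. by []. Qed.

Lemma Fapp a b c n : app a b = Some c -> F a (pos (g b).+1 n) = F c n.
Proof.
move=> h; have Hp : Pk a (pos (g b).+1 n) (n, c) by exists b.
have h2 := pos_ge2 (g b) n; have hn := pos_gt (g b).+1 n.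
rewrite /F /=.
have -> : (pos (g b).+1 n == 0) = false by apply/eqP; lia.
have -> : (pos (g b).+1 n == 1) = false by apply/eqP; lia.
rewrite (pickS Hp); rewrite -[in RHS]/(Gf n.+1 c n); apply: Gf_stable; lia.
Qed.

End Constr.

Theorem corollary6p2 (A : Type) (app : A -> A -> option A) :
  is_pca app -> countable_type A -> embeds_in_K2 app.
Proof.
move=> _ [g ginj].
exists (F app g); split.
  move=> a a' h; apply: ginj; rewrite -(F1 app g a) -(F1 app g a').
  by rewrite h.
move=> a b c h n; rewrite /Phi F0 pickleK.
have -> : F app g c n = join (F app g a) (F app g b) (pos (join (F app g a) (F app g b) 3).+2 n).
  rewrite /join /= F1.
  have -> : pos (g b).+2 n = (pos (g b).+1 n).*2 by rewrite /pos expnS -mulnA; lia.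
  rewrite odd_double doubleK; symmetry; exact: (Fapp ginj n h).
exact: evMAIN.
Qed.
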